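(* For all pure states $\rho,\omega\in\mathcal{P}_1(\mathbb{C}^2)$ one has $D_{\mathrm{sym}}^2(\rho,\omega)=6-2\langle\mathbf{b}_\rho,\mathbf{b}_\omega\rangle$, $D_{\mathrm{sym}}^2(\rho,\rho)=4$, and consequently $d_{\mathrm{sym}}(\rho,\omega)=|\mathbf{b}_\rho-\mathbf{b}_\omega|$, where $\langle\cdot,\cdot\rangle$ and $|\cdot|$ are the Euclidean inner product and norm on $\mathbb{R}^3$.
   Context: Let $\mathcal{H}=\mathbb{C}^2$, $\mathcal{H}^*$ its dual space. $\mathcal{S}(\mathcal{H})$ is the set of density operators on $\mathcal{H}$; $\mathcal{P}_1(\mathcal{H})$ is the set of pure states (rank-one orthogonal projections). For a linear operator $A$ on $\mathcal{H}$, its transpose $A^T$ is the operator on $\mathcal{H}^*$ defined by $(A^T\varphi)(x)=\varphi(Ax)$. For $\rho,\omega\in\mathcal{S}(\mathcal{H})$, $\mathcal{C}(\rho,\omega)=\{\Pi\in\mathcal{S}(\mathcal{H}\otimes\mathcal{H}^* ):\ \mathrm{tr}_{\mathcal{H}^*}[\Pi]=\omega,\ \mathrm{tr}_{\mathcal{H}}[\Pi]=\rho^T\}$. The Pauli matrices are $\sigma_1=\begin{bmatrix}0&1\\1&0\end{bmatrix}$, $\sigma_2=\begin{bmatrix}0&-i\\i&0\end{bmatrix}$, $\sigma_3=\begin{bmatrix}1&0\\0&-1\end{bmatrix}$. $C_{\mathrm{sym}}=\sum_{j=1}^3(\sigma_j\otimes I^T-I\otimes\sigma_j^T)^2$, $D_{\mathrm{sym}}^2(\rho,\omega)=\inf\{\mathrm{tr}[\Pi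 C_{\mathrm{sym}}]:\Pi\in\mathcal{C}(\rho,\omega)\}$, and $d_{\mathrm{sym}}(\rho,\omega)=\big(D_{\mathrm{sym}}^2(\rho,\omega)-\tfrac12(D_{\mathrm{sym}}^2(\rho,\rho)+D_{\mathrm{sym}}^2(\omega,\omega))\big)^{1/2}$. The Bloch vector of $\rho$ is $\mathbf{b}_\rho=(\mathrm{tr}[\sigma_j\rho])_{j=1}^3$. *)

(* Defs.v *)
From mathcomp Require Import all_boot all_order all_algebra.
From mathcomp Require Import classical_sets reals.
From mathcomp Require Export complex mxtens.
Set Implicit Arguments. Unset Strict Implicit. Unset Printing Implicit Defensive.
Import GRing.Theory Num.Theory.
Local Open Scope ring_scope.
Local Open Scope complex_scope.

Section QDefs.
Variable R : realType.
Local Notation C := R[i].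

Definition adj {m n : nat} (A : 'M[C]_(m, n)) : 'M[C]_(n, m) :=
  (map_mx (fun z : C => z^*) A)^T.

Definition psd {n : nat} (A : 'M[C]_n) : Prop :=
  adj A = A /\ forall v : 'cV[C]_n, 0 <= (adj v *m A *m v) 0 0.

Definition density {n : nat} (A : 'M[C]_n) : Prop := psd A /\ \tr A = 1.

Definition pure {n : nat} (P : 'M[C]_n) : Prop :=
  adj P = P /\ P *m P = P /\ \rank P = 1%N.

(* H (x) H^* with H = C^2 is represented as C^(2*2) via the Kronecker
   product [*t]; H^* is identified with C^2 through the dual basis, in which
   the transpose operator A^T has the transposed matrix. *)

Definition ptr2 (P : 'M[C]_(2 * 2)) : 'M[C]_2 :=
  \matrix_(a < 2, b < 2)
    \sum_(k < 2) P (mxtens_index (a, k)) (mxtens_index (b, k)).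

Definition ptr1 (P : 'M[C]_(2 * 2)) : 'M[C]_2 :=
  \matrix_(a < 2, b < 2)
    \sum_(k < 2) P (mxtens_index (k, a)) (mxtens_index (k, b)).

Definition coupling (rho omega : 'M[C]_2) (P : 'M[C]_(2 * 2)) : Prop :=
  density P /\ ptr2 P = omega /\ ptr1 P = rho^T.

Definition sigma1 : 'M[C]_2 :=
  \matrix_(a < 2, b < 2) (if a == b then 0 else 1).
Definition sigma2 : 'M[C]_2 :=
  \matrix_(a < 2, b < 2)
    (if a == b then 0 else if (a : nat) == 0%N then - 'i else 'i).
Definition sigma3 : 'M[C]_2 :=
  \matrix_(a < 2, b < 2)
    (if a == b then (if (a : nat) == 0%N then 1 else -1) else 0).
Definition pauli (j : 'I_3) : 'M[C]_2 :=
  if (j : nat) == 0%N then sigma1 else if (j : nat) == 1%N then sigma2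
  else sigma3.

Definition Csym : 'M[C]_(2 * 2) :=
  \sum_(j < 3)
    let X := pauli j *t (1%:M : 'M[C]_2)^T - (1%:M : 'M[C]_2) *t (pauli j)^T in
    X *m X.

(* D_sym^2(rho, omega) = inf { tr[Pi C_sym] : Pi in C(rho, omega) }
   (tr[Pi C_sym] is real; we take its real part) *)
Definition Dsym2 (rho omega : 'M[C]_2) : R :=
  inf [set x : R | exists P, coupling rho omega P /\
                              x = complex.Re (\tr (P *m Csym))].

Definition dsym (rho omega : 'M[C]_2) : R :=
  Num.sqrt (Dsym2 rho omega - (Dsym2 rho rho + Dsym2 omega omega) / 2).

Definition bloch (rho : 'M[C]_2) (j : 'I_3) : R :=
  complex.Re (\tr (pauli j *m rho)).

End QDefs.

(* Main.v *)
Require Import Defs.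
From mathcomp Require Import all_boot all_order all_algebra.
From mathcomp Require Import classical_sets reals complex mxtens ring lra.
Require Import Defs.
Import Order.TTheory GRing.Theory Num.Theory.
Local Open Scope ring_scope.
Local Open Scope complex_scope.


Lemma adjK (R : realType) m n (A : 'M[R[i]]_(m,n)) : adj (adj A) = A.
Proof. by apply/matrixP=> i j; rewrite !mxE conjcK. Qed.

Lemma adjM (R : realType) m n p (A : 'M[R[i]]_(m,n)) (B : 'M[R[i]]_(n,p)) :
  adj (A *m B) = adj B *m adj A.
Proof.
apply/matrixP=> i j; rewrite !mxE rmorph_sum; apply: eq_bigr=> k _.
by rewrite !mxE rmorphM mulrC.
Qed.

Lemma adjD (R : realType) m n (A B : 'M[R[i]]_(m,n)) : adj (A + B) = adj A + adj B.
Proof. by apply/matrixP=> i j; rewrite !mxE rmorphD. Qed.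

Lemma adjN (R : realType) m n (A : 'M[R[i]]_(m,n)) : adj (- A) = - adj A.
Proof. by apply/matrixP=> i j; rewrite !mxE rmorphN. Qed.

Lemma adjB (R : realType) m n (A B : 'M[R[i]]_(m,n)) : adj (A - B) = adj A - adj B.
Proof. by rewrite adjD adjN. Qed.

Lemma adjZ (R : realType) m n (c : R[i]) (A : 'M[R[i]]_(m,n)) : adj (c *: A) = conjc c *: adj A.
Proof. by apply/matrixP=> i j; rewrite !mxE rmorphM. Qed.

Lemma adj11 (R : realType) (A : 'M[R[i]]_1) : adj A 0 0 = conjc (A 0 0).
Proof. by rewrite !mxE. Qed.

Lemma adj1 (R : realType) n : adj (1%:M : 'M[R[i]]_n) = 1%:M.
Proof. by apply/matrixP=> i j; rewrite !mxE eq_sym conjc_nat. Qed.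

Lemma adjT (R : realType) m n (A : 'M[R[i]]_(m,n)) : adj (A^T) = (adj A)^T.
Proof. by apply/matrixP=> i j; rewrite !mxE. Qed.

Lemma adj_tens (R : realType) m n p q (A : 'M[R[i]]_(m,n)) (B : 'M[R[i]]_(p,q)) :
  adj (A *t B) = adj A *t adj B.
Proof.
apply/matrixP=> i j.
case: (mxtens_indexP i)=> i0 i1; case: (mxtens_indexP j)=> j0 j1.
by rewrite tensmxE !mxE !mxtens_indexK /= rmorphM.
Qed.

Lemma tr_adj (R : realType) n (A : 'M[R[i]]_n) : \tr (adj A) = conjc (\tr A).
Proof. by rewrite /adj mxtrace_tr /mxtrace rmorph_sum; apply: eq_bigr=> k _; rewrite mxE. Qed.

Lemma adj_delta (R : realType) m n (i : 'I_m) (j : 'I_n) :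
  adj (delta_mx i j : 'M[R[i]]_(m,n)) = delta_mx j i.
Proof.
by apply/matrixP=> a b; rewrite !mxE conjc_nat andbC.
Qed.

Lemma ge0_conj (R : realType) (a : R[i]) : 0 <= a -> conjc a = a.
Proof.
rewrite lecE => /andP [/eqP h _]; case: a h => x y /= ->.
by rewrite oppr0.
Qed.

Lemma psd_ker (R : realType) n (A : 'M[R[i]]_n) (z : 'cV[R[i]]_n) :
  psd A -> (adj z *m A *m z) 0 0 = 0 -> A *m z = 0.
Proof.
case=> hA hpos hz; apply/matrixP=> l j; rewrite [j]ord1 [RHS]mxE.
set s := (A *m z) l 0.
pose e : 'cV[R[i]]_n := delta_mx l 0.
have f1 : (adj e *m A *m z) 0 0 = s.
  by rewrite adj_delta -mulmxA -rowE mxE.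
have f2 : (adj z *m A *m e) 0 0 = conjc s.
  rewrite -f1 -adj11 !adjM adjK hA mulmxA //.
set a := (adj e *m A *m e) 0 0.
have a0 : 0 <= a by apply: hpos.
have ac : conjc a = a by apply: ge0_conj.
pose x := (a + 1) *: z - s *: e.
have := hpos x.
have -> : (adj x *m A *m x) 0 0 = - ((a + 2%:R) * (s * conjc s)).
  rewrite /x adjB !adjZ !mulmxBl !mulmxBr -!scalemxAl -!scalemxAr.
  move: hz f1 f2; rewrite -/a.
  set q1 := (adj z *m A *m z); set q2 := (adj z *m A *m e).
  set q3 := (adj e *m A *m z); set q4 := (adj e *m A *m e).
  have qa : q4 0 0 = a by [].
  have e1 : conjc (a+1) = a+1.
    by apply: ge0_conj; rewrite addr_ge0 // ler01.
  clearbody q1 q2 q3 q4; move=> hz f1 f2.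
  rewrite !mxE hz f1 f2 qa e1.
  ring.
move=> h.
have a2 : 0 < a + 2%:R by rewrite ltr_wpDl // ltr0n.
have p0 := mulcJ_ge0 s.
have : (a + 2%:R) * (s * conjc s) == 0.
  by rewrite eq_le -oppr_ge0 h mulr_ge0 // ltW.
by rewrite mulf_eq0 (gt_eqF a2) /= mulf_eq0 conjc_eq0 orbb => /eqP.
Qed.

Lemma rank1_fact (F : fieldType) m n (P : 'M[F]_(m,n)) : \rank P = 1%N ->
  exists u : 'cV[F]_m, exists v : 'rV[F]_n, P = u *m v.
Proof.
move=> r1; move: (mulmx_base P); move: (col_base P) (row_base P).
rewrite r1 => c r h; by exists c, r.
Qed.

Lemma tr11 (F : fieldType) (M : 'M[F]_1) : \tr M = M 0 0.
Proof. by rewrite /mxtrace big_ord1. Qed.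

Lemma pure_fact (R : realType) (P : 'M[R[i]]_2) : pure P ->
  exists u : 'cV[R[i]]_2, exists v : 'rV[R[i]]_2, P = u *m v /\ v *m u = 1%:M.
Proof.
case=> _ [idem r1]; have [u [v Puv]] := @rank1_fact _ _ _ _ r1.
exists u, v; split => //.
have Pn0 : P != 0 by apply/eqP=> P0; move: r1; rewrite P0 mxrank0.
move: idem; rewrite Puv mulmxA -(mulmxA u v u) [v *m u]mx11_scalar.
rewrite mul_mx_scalar -scalemxAl => h.
have : ((v *m u) 0 0 - 1) *: (u *m v) = 0 by rewrite scalerBl h scale1r subrr.
move/eqP; rewrite scaler_eq0 -Puv (negbTE Pn0) orbF subr_eq0 => /eqP ->.
done.
Qed.

Lemma fact_sandwich (F : fieldType) n (u : 'cV[F]_n) (v : 'rV[F]_n) (A : 'M[F]_n) :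
  (u *m v) *m A *m (u *m v) = \tr ((u *m v) *m A) *: (u *m v).
Proof.
rewrite -!mulmxA mxtrace_mulC mulmxA tr11.
have -> : u *m v *m (A *m (u *m v)) = u *m (v *m A *m u) *m v by rewrite !mulmxA.
rewrite [v *m A *m u]mx11_scalar mul_mx_scalar -scalemxAl.
by rewrite [in RHS]mxE mulr1n.
Qed.

Lemma fact_tr (F : fieldType) n (u : 'cV[F]_n) (v : 'rV[F]_n) :
  v *m u = 1%:M -> \tr (u *m v) = 1.
Proof. by move=> h; rewrite mxtrace_mulC h tr11 mxE. Qed.

Lemma sum_tens (V : nmodType) m n (F : 'I_(m*n) -> V) :
  \sum_(k < m*n) F k = \sum_(i < m) \sum_(j < n) F (mxtens_index (i,j)).
Proof.
rewrite pair_big /= (reindex (@mxtens_index m n)) /=.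
  by apply: eq_bigr=> [[i j]] _.
by exists (@mxtens_unindex m n)=> k _; rewrite (mxtens_indexK, mxtens_unindexK).
Qed.

Lemma tensBl (R : comPzRingType) m n p q (A B : 'M[R]_(m,n)) (C : 'M[R]_(p,q)) :
  (A - B) *t C = A *t C - B *t C.
Proof.
apply/matrixP=> i j; case: (mxtens_indexP i)=> i0 i1; case: (mxtens_indexP j)=> j0 j1.
by rewrite !mxE !mxtens_indexK /= mulrBl.
Qed.

Lemma tensBr (R : comPzRingType) m n p q (A : 'M[R]_(m,n)) (B C : 'M[R]_(p,q)) :
  A *t (B - C) = A *t B - A *t C.
Proof.
apply/matrixP=> i j; case: (mxtens_indexP i)=> i0 i1; case: (mxtens_indexP j)=> j0 j1.
by rewrite !mxE !mxtens_indexK /= mulrBr.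
Qed.

Lemma tensZZ (R : comPzRingType) m n p q a b (A : 'M[R]_(m,n)) (B : 'M[R]_(p,q)) :
  (a *: A) *t (b *: B) = (a * b) *: (A *t B).
Proof.
apply/matrixP=> i j; case: (mxtens_indexP i)=> i0 i1; case: (mxtens_indexP j)=> j0 j1.
by rewrite !mxE !mxtens_indexK /=; ring.
Qed.

Lemma tens11 (R : comPzRingType) m n :
  (1%:M : 'M[R]_m) *t (1%:M : 'M[R]_n) = 1%:M.
Proof.
apply/matrixP=> i j; case: (mxtens_indexP i)=> i0 i1; case: (mxtens_indexP j)=> j0 j1.
rewrite tensmxE !mxE (inj_eq (can_inj (@mxtens_indexK m n))) xpair_eqE.
by case: (i0 == j0); case: (i1 == j1); rewrite /= ?mulr1 ?mulr0.
Qed.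

Lemma tr_tens (R : comPzRingType) m n (A : 'M[R]_m) (B : 'M[R]_n) :
  \tr (A *t B) = \tr A * \tr B.
Proof.
rewrite /mxtrace sum_tens mulr_suml; apply: eq_bigr=> i _; rewrite mulr_sumr.
by apply: eq_bigr=> j _; rewrite tensmxE.
Qed.

Lemma ptr2_tens (R : realType) (A B : 'M[R[i]]_2) : ptr2 (A *t B) = \tr B *: A.
Proof.
apply/matrixP=> a b; rewrite !mxE /mxtrace mulr_suml; apply: eq_bigr=> k _.
by rewrite tensmxE mulrC.
Qed.

Lemma ptr1_tens (R : realType) (A B : 'M[R[i]]_2) : ptr1 (A *t B) = \tr A *: B.
Proof.
apply/matrixP=> a b; rewrite !mxE /mxtrace mulr_suml; apply: eq_bigr=> k _.
by rewrite tensmxE.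
Qed.

Lemma tr_ptr2 (R : realType) (P : 'M[R[i]]_(2*2)) (A : 'M[R[i]]_2) :
  \tr (P *m (A *t 1%:M)) = \tr (A *m ptr2 P).
Proof.
rewrite /mxtrace sum_tens.
rewrite !big_ord_recl !big_ord0 !mxE !sum_tens !big_ord_recl !big_ord0 !tensmxE !mxE.
rewrite !big_ord_recl !big_ord0 /=.
ring.
Qed.

Lemma tr_ptr1 (R : realType) (P : 'M[R[i]]_(2*2)) (B : 'M[R[i]]_2) :
  \tr (P *m (1%:M *t B)) = \tr (B *m ptr1 P).
Proof.
rewrite /mxtrace sum_tens.
rewrite !big_ord_recl !big_ord0 !mxE !sum_tens !big_ord_recl !big_ord0 !tensmxE !mxE.
rewrite !big_ord_recl !big_ord0 /=.
ring.
Qed.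

Lemma psd_proj_ker (R : realType) n (P M : 'M[R[i]]_n) :
  psd P -> adj M = M -> M *m M = M -> \tr (P *m M) = 0 -> P *m M = 0.
Proof.
move=> hP hM idM htr.
have h0 : \tr (adj M *m P *m M) = 0.
  by rewrite hM mxtrace_mulC mulmxA idM mxtrace_mulC.
have hd k : (adj M *m P *m M) k k = (adj (col k M) *m P *m col k M) 0 0.
  rewrite !mxE; apply: eq_bigr=> l _; rewrite !mxE; congr (_ * _).
  by apply: eq_bigr=> p _; rewrite !mxE.
have hz k : (adj (col k M) *m P *m col k M) 0 0 = 0.
  rewrite -hd; move: h0; rewrite /mxtrace => h0.
  apply: (psumr_eq0P _ h0) => // i _; rewrite hd; case: hP=> _; apply.
apply/matrixP=> i k; rewrite [RHS]mxE.
have := @psd_ker _ _ _ _ hP (hz k) => /matrixP /(_ i 0); rewrite [X in _ = X]mxE => h.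
apply: (eq_trans _ h); rewrite !mxE.
by apply: eq_bigr=> p _; rewrite !mxE.
Qed.

Local Close Scope complex_scope.

Local Notation one2 := (1%:M : 'M_2).

Lemma sandwich_pure (R : realType) (w A : 'M[R[i]]_2) : pure w ->
  w *m A *m w = \tr (w *m A) *: w.
Proof. by case/pure_fact=> u [v [-> _]]; apply: fact_sandwich. Qed.

Lemma sandwich_pureT (R : realType) (w A : 'M[R[i]]_2) : pure w ->
  w^T *m A *m w^T = \tr (w^T *m A) *: w^T.
Proof. by case/pure_fact=> u [v [-> _]]; rewrite trmx_mul; apply: fact_sandwich. Qed.

Lemma tr_pure (R : realType) (w : 'M[R[i]]_2) : pure w -> \tr w = 1.
Proof. by case/pure_fact=> u [v [-> h]]; apply: fact_tr. Qed.

Lemma coupling_prod (R : realType) (rho omega : 'M[R[i]]_2) (PI : 'M[R[i]]_(2*2)) :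
  pure rho -> pure omega -> coupling rho omega PI ->
  forall A B : 'M[R[i]]_2, \tr (PI *m (A *t B)) = \tr (omega *m A) * \tr (rho^T *m B).
Proof.
move=> hr hw [[hP htr1] [h2 h1]].
have hw' := hw; have hr' := hr.
case: hw' => wH [wI _]; case: hr' => rH [rI _].
have PH : adj PI = PI by case: hP.
have S1 : PI *m (omega *t one2) = PI.
  have i1 : (1%:M : 'M[R[i]]_2) *m 1%:M = 1%:M by rewrite mulmx1.
  have hM : adj ((one2 - omega) *t one2) = (one2 - omega) *t one2.
    by rewrite adj_tens adjB adj1 wH.
  have iM : ((one2 - omega) *t one2) *m ((one2 - omega) *t one2) = (one2 - omega) *t one2.
    by rewrite tensmx_mul i1 mulmxBl !mulmxBr !mul1mx !mulmx1 wI subrr subr0.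
  have tM : \tr (PI *m ((one2 - omega) *t one2)) = 0.
    by rewrite tr_ptr2 h2 mulmxBl mul1mx wI subrr mxtrace0.
  have := @psd_proj_ker _ _ PI _ hP hM iM tM.
  rewrite tensBl tens11 mulmxBr mulmx1.
  by move/eqP; rewrite subr_eq0 => /eqP.
have S2 : PI *m (one2 *t rho^T) = PI.
  have i1 : (1%:M : 'M[R[i]]_2) *m 1%:M = 1%:M by rewrite mulmx1.
  have rI' : rho^T *m rho^T = rho^T by rewrite -trmx_mul rI.
  have hM : adj (one2 *t (one2 - rho^T)) = one2 *t (one2 - rho^T).
    by rewrite adj_tens adjB adj1 adjT rH.
  have iM : (one2 *t (one2 - rho^T)) *m (one2 *t (one2 - rho^T)) = one2 *t (one2 - rho^T).
    by rewrite tensmx_mul i1 mulmxBl !mulmxBr !mul1mx !mulmx1 rI' subrr subr0.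
  have tM : \tr (PI *m (one2 *t (one2 - rho^T))) = 0.
    by rewrite tr_ptr1 h1 mulmxBl mul1mx rI' subrr mxtrace0.
  have := @psd_proj_ker _ _ PI _ hP hM iM tM.
  rewrite tensBr tens11 mulmxBr mulmx1.
  by move/eqP; rewrite subr_eq0 => /eqP.
have S3 : (omega *t one2) *m PI = PI.
  by rewrite -[LHS]adjK adjM adj_tens adj1 wH PH S1 PH.
have S4 : (one2 *t rho^T) *m PI = PI.
  by rewrite -[LHS]adjK adjM adj_tens adj1 adjT rH PH S2 PH.
have eP : omega *t rho^T = (omega *t one2) *m (one2 *t rho^T).
  by rewrite tensmx_mul mulmx1 mul1mx.
have PiP : PI *m (omega *t rho^T) = PI by rewrite eP mulmxA S1 S2.
have PPi : (omega *t rho^T) *m PI = PI by rewrite eP -mulmxA S4 S3.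
move=> A B.
have -> : PI *m (A *t B) = (omega *t rho^T) *m (PI *m (omega *t rho^T) *m (A *t B)).
  by rewrite PiP mulmxA PPi.
rewrite mxtrace_mulC -!mulmxA tensmx_mul tensmx_mul !mulmxA.
rewrite sandwich_pure // sandwich_pureT // tensZZ -scalemxAr mxtraceZ PiP.
by rewrite htr1 mulr1.
Qed.

Lemma ii (R : realType) : (Complex 0 1 : R[i]) * Complex 0 1 = -1.
Proof. by apply/eqP; rewrite eq_complex /= !mul0r !mulr0 !mul1r sub0r addr0 oppr0 !eqxx. Qed.

Lemma conj_i (R : realType) : conjc ('i%C : R[i]) = - 'i%C.
Proof. by apply/eqP; rewrite eq_complex /= oppr0 !eqxx. Qed.

Lemma pauli_herm (R : realType) (j : 'I_3) : adj (pauli R j) = pauli R j.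
Proof.
apply/matrixP=> a b.
case: j => [[|[|[|//]]] ?]; case: a => [[|[|//]] ?]; case: b => [[|[|//]] ?];
  rewrite /pauli /= !mxE /= ?conjc0 ?conjc1 ?rmorphN ?conjc1 ?conj_i ?opprK //. all: rewrite ?oppr0 //. all: by apply/eqP; rewrite eq_complex /= ?oppr0 ?opprK ?eqxx.
Qed.

Lemma pauli_sq (R : realType) (j : 'I_3) : pauli R j *m pauli R j = 1%:M.
Proof.
apply/matrixP=> a b.
case: j => [[|[|[|//]]] ?]; case: a => [[|[|//]] ?]; case: b => [[|[|//]] ?];
  rewrite /pauli /= !mxE !big_ord_recl big_ord0 !mxE /=. all: rewrite ?ii ?mul0r ?mulr0 ?mul1r ?mulr1 ?add0r ?addr0 ?mulrNN ?mulN1r ?mulNr ?ii ?opprK ?mulrN ?ii ?opprK //. all: try (by apply/eqP; rewrite eq_complex /= !mulr1 !mul0r !subr0 !eqxx). all: by rewrite ?mulr1n ?mulr1.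
Qed.

Lemma herm_tr_real (R : realType) (A B : 'M[R[i]]_2) :
  adj A = A -> adj B = B -> \tr (A *m B) = (complex.Re (\tr (A *m B)))%:C%C.
Proof.
move=> hA hB.
have hz : conjc (\tr (A *m B)) = \tr (A *m B).
  by rewrite -tr_adj adjM hA hB mxtrace_mulC.
move: (\tr (A *m B)) hz => [x y] /= [h].
have -> : y = 0 by lra.
by [].
Qed.

Lemma proj_psd (R : realType) n (X : 'M[R[i]]_n) : adj X = X -> X *m X = X -> psd X.
Proof.
move=> hX iX; split=> // v.
have -> : adj v *m X *m v = adj (X *m v) *m (X *m v).
  by rewrite adjM hX -[in LHS]iX !mulmxA.
rewrite mxE; apply: sumr_ge0 => k _; rewrite !mxE mulrC; exact: mulcJ_ge0.
Qed.

Lemma prod_coupling (R : realType) (rho omega : 'M[R[i]]_2) :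
  pure rho -> pure omega -> coupling rho omega (omega *t rho^T).
Proof.
move=> hr hw; have hr' := hr; have hw' := hw.
case: hw' => wH [wI _]; case: hr' => rH [rI _].
have trT : \tr rho^T = 1 by rewrite mxtrace_tr; apply: tr_pure.
split; [split|split].
- apply: proj_psd; first by rewrite adj_tens wH adjT rH.
  by rewrite tensmx_mul wI -trmx_mul rI.
- by rewrite tr_tens (@tr_pure _ _ hw) trT mulr1.
- by rewrite ptr2_tens trT scale1r.
- by rewrite ptr1_tens (@tr_pure _ _ hw) scale1r.
Qed.

Lemma Csym_tr (R : realType) (rho omega : 'M[R[i]]_2) (PI : 'M[R[i]]_(2*2)) :
  (forall A B : 'M[R[i]]_2, \tr (PI *m (A *t B)) = \tr (omega *m A) * \tr (rho^T *m B)) ->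
  \tr omega = 1 -> \tr rho^T = 1 ->
  \tr (PI *m Csym R) =
  \sum_(j < 3) (2%:R - 2%:R * (\tr (omega *m pauli R j) * \tr (pauli R j *m rho))).
Proof.
move=> hF hw hr.
rewrite /Csym mulmx_sumr raddf_sum; apply: eq_bigr=> j _ /=.
rewrite trmx1 !mulmxBl !mulmxBr !tensmx_mul !mulmx1 !mul1mx.
rewrite !raddfB /= !hF (pauli_sq R j) !mulmx1 hw hr -[(pauli R j)^T *m _]trmx_mul (pauli_sq R j) trmx1 mulmx1 hr.
rewrite -trmx_mul mxtrace_tr.
ring.
Qed.

Lemma tr_bloch (R : realType) (rho : 'M[R[i]]_2) (j : 'I_3) : adj rho = rho ->
  \tr (pauli R j *m rho) = (bloch rho j)%:C%C.
Proof. by move=> h; rewrite /bloch -herm_tr_real // pauli_herm. Qed.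

Lemma realC_inj (R : realType) (x y : R) : (x%:C%C : R[i]) = y%:C%C -> x = y.
Proof. by case. Qed.

Lemma poly_id (R : realType) (a b c d I mI : R[i]) :
  I * I = -1 -> mI = - I -> a * a + (b * c + 0) = a -> a + (d + 0) = 1 ->
  (0 * a + (1 * c + 0) + (1 * b + (0 * d + 0) + 0)) ^+ 2 +
  (0 * a + (mI * c + 0) + (I * b + (0 * d + 0) + 0)) ^+ 2 +
  (1 * a + (0 * c + 0) + (0 * b + (-1 * d + 0) + 0)) ^+ 2 = 1.
Proof.
move=> hI -> h1 h2.
have e1 : a * a + b * c - a = 0.
  by apply/eqP; rewrite subr_eq0; apply/eqP; rewrite -[RHS]h1 addr0.
have e2 : a + d - 1 = 0.
  by apply/eqP; rewrite subr_eq0; apply/eqP; rewrite -[RHS]h2 addr0.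
transitivity ((b+c)^+2 + (I * I)*(b-c)^+2 + (a-d)^+2); first by ring.
rewrite hI (_ : _ + _ = 1 + 4%:R * (a * a + b * c - a) - (a + d - 1) * (3%:R * a - d - 1)).
  by rewrite e1 e2 mulr0 mul0r addr0 subr0.
ring.
Qed.

Lemma bloch_sqC (R : realType) (rho : 'M[R[i]]_2) : pure rho ->
  (\tr (pauli R 0 *m rho))^+2 + (\tr (pauli R 1 *m rho))^+2 + (\tr (pauli R 2%:R *m rho))^+2 = 1.
Proof.
move=> hr; have hr' := hr; case: hr' => rH [rI _].
have ht := @tr_pure _ _ hr.
move: ht rI => /= ht /matrixP /(_ 0 0) rI.
rewrite /pauli /= /mxtrace !big_ord_recl !big_ord0 in ht rI *.
rewrite !mxE !big_ord_recl !big_ord0 !mxE /= in ht rI *.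
apply: (@poly_id R _ _ _ _ (Complex 0 1) _ (ii R) _ rI ht).
by apply/eqP; rewrite eq_complex /= !eqxx.
Qed.


Lemma bloch_sq (R : realType) (rho : 'M[R[i]]_2) : pure rho ->
  \sum_(j < 3) bloch rho j ^+ 2 = 1.
Proof.
move=> hr; have hC := @bloch_sqC _ _ hr; case: hr => rH _.
rewrite !tr_bloch // !expr2 in hC.
move: hC => /(congr1 (@complex.Re _)) /= hC.
rewrite !big_ord_recl big_ord0 /=.
have e1 : lift ord0 ord0 = 1 :> 'I_3 by apply: val_inj.
have e2 : lift ord0 (lift ord0 ord0) = 2%:R :> 'I_3 by apply: val_inj.
have e0 : ord0 = 0 :> 'I_3 by apply: val_inj.
rewrite e1 e2 [bloch rho ord0](congr1 (bloch rho) e0).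
rewrite -hC !mulr0 !subr0 !expr2 addr0 addrA.
reflexivity.
Qed.

Lemma coupling_val (R : realType) (rho omega : 'M[R[i]]_2) (P : 'M[R[i]]_(2*2)) :
  pure rho -> pure omega -> coupling rho omega P ->
  complex.Re (\tr (P *m Csym R)) = 6 - 2 * \sum_(j < 3) bloch rho j * bloch omega j.
Proof.
move=> hr hw hc.
have trT : \tr rho^T = 1 by rewrite mxtrace_tr; apply: tr_pure.
rewrite (@Csym_tr _ _ _ _ (@coupling_prod _ _ _ _ hr hw hc)) ?trT ?(@tr_pure _ _ hw) //.
case: hr => rH _; case: hw => wH _.
under eq_bigr do rewrite mxtrace_mulC !tr_bloch //.
rewrite !big_ord_recl !big_ord0 /=.
ring.
Qed.

Lemma Dsym2_val (R : realType) (rho omega : 'M[R[i]]_2) :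
  pure rho -> pure omega ->
  Dsym2 rho omega = 6 - 2 * \sum_(j < 3) bloch rho j * bloch omega j.
Proof.
move=> hr hw; rewrite /Dsym2.
set v := 6 - 2 * _.
rewrite (_ : [set x | _]%classic = [set v]%classic) ?inf1 //.
apply/seteqP; split=> x /=.
- by move=> [P [hc ->]]; apply: coupling_val.
- move=> ->; exists (omega *t rho^T); split; first exact: (@prod_coupling _ _ _ hr hw).
  by rewrite (@coupling_val _ _ _ _ hr hw (@prod_coupling _ _ _ hr hw)).
Qed.

Theorem mainTheorem3 (R : realType) (rho omega : 'M[R[i]]_2) :
  pure rho -> pure omega ->
  [/\ Dsym2 rho omega = 6 - 2 * \sum_(j < 3) bloch rho j * bloch omega j,
      Dsym2 rho rho = 4
    & dsym rho omega = Num.sqrt (\sum_(j < 3) (bloch rho j - bloch omega j) ^+ 2)].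
Proof.
move=> hr hw.
have sq : forall a : 'M[R[i]]_2, pure a -> \sum_(j < 3) bloch a j * bloch a j = 1.
  by move=> a ha; rewrite -(@bloch_sq _ _ ha); apply: eq_bigr=> j _; rewrite expr2.
split.
- exact: Dsym2_val.
- by rewrite Dsym2_val // sq //; lra.
- rewrite /dsym !Dsym2_val // !sq //; congr Num.sqrt.
  have := sq _ hr; have := sq _ hw; rewrite !big_ord_recl !big_ord0 => h1 h2.
  nra.
Qed.
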